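(* For any $(\boldsymbol{x},\boldsymbol{v}),(\boldsymbol{x}^\star,\boldsymbol{v}^\star)\in\mathbb{T}^3\times\mathbb{S}^2$ there exist $N\in\mathbb{N}$ and $\underline{\omega}^N=(\omega_1,\dots,\omega_N)\in\Omega_0^N$ such that $$f_{\underline{\omega}^N}(\boldsymbol{x})=\boldsymbol{x}^\star\qquad\text{and}\qquad \frac{D_{\boldsymbol{x}}f_{\underline{\omega}^N}\boldsymbol{v}}{|D_{\boldsymbol{x}}f_{\underline{\omega}^N}\boldsymbol{v}|}=\boldsymbol{v}^\star.$$
   Context: $\mathbb{T}^3=\mathbb{R}^3/(2\pi\mathbb{Z})^3$ with points $\boldsymbol{x}=(x,y,z)$; $\mathbb{S}^2\subset\mathbb{R}^3$ is the unit sphere. Fix $U>0$ and let $\Omega_0=[-U,U]^3\times[0,2\pi)^3$, with elements $\omega=(\mathsf{A},\mathsf{B},\mathsf{C},\alpha,\beta,\gamma)$. Define maps of $\mathbb{T}^3$: $f_{(\mathsf{A},\alpha)}(x,y,z)=(x+\mathsf{A}\sin(z+\alpha),\ y+\mathsf{A}\cos(z+\alpha),\ z)$, $f_{(\mathsf{B},\beta)}(x,y,z)=(x,\ y+\mathsf{B}\sin(x+\beta),\ z+\mathsf{B}\cos(x+\beta))$, $f_{(\mathsf{C},\gamma)}(x,y,z)=(x+\mathsf{C}\cos(y+\gamma),\ y,\ z+\mathsf{C}\sin(y+\gamma))$, and $f_\omega=f_{(\mathsf{C},\gamma)}\circ f_{(\mathsf{B},\beta)}\circ f_{(\mathsf{A},\alpha)}$.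 For $\underline{\omega}^N=(\omega_1,\dots,\omega_N)\in\Omega_0^N$, $f_{\underline{\omega}^N}=f_{\omega_N}\circ\cdots\circ f_{\omega_1}$, and $D_{\boldsymbol{x}}f_{\underline{\omega}^N}$ is its Jacobian matrix at $\boldsymbol{x}$. *)

(* Defs.v *)
From HB Require Import structures.
From mathcomp Require Import all_boot all_order all_algebra.
From mathcomp Require Import all_classical all_reals all_analysis.
Set Implicit Arguments. Unset Strict Implicit. Unset Printing Implicit Defensive.
Import Order.TTheory GRing.Theory Num.Theory.
Import numFieldNormedType.Exports.
Local Open Scope ring_scope.

Section Defs.
Variable R : realType.

(* points of R^3 (lifts of points of T^3) and tangent vectors *)
Definition vec3 (a b c : R) : 'rV[R]_3 :=
  \row_(i < 3) (if (i : nat) == 0%N then a else if (i : nat) == 1%N then b else c).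
Definition cx (p : 'rV[R]_3) := p ord0 ord0.
Definition cy (p : 'rV[R]_3) := p ord0 (inord 1).
Definition cz (p : 'rV[R]_3) := p ord0 (inord 2).

(* Euclidean norm on R^3 (the library norm on 'rV is the sup norm) *)
Definition enorm (v : 'rV[R]_3) : R := Num.sqrt (\sum_(i < 3) v ord0 i ^+ 2).

Definition on_sphere (v : 'rV[R]_3) : Prop := enorm v = 1.

Definition torus_eq (p q : 'rV[R]_3) : Prop :=
  exists k : 'I_3 -> int, forall i, q ord0 i = p ord0 i + (k i)%:~R * (2 * pi).

Record omega := Omega { oA : R; oB : R; oC : R; oal : R; obe : R; oga : R }.

Definition in_Omega0 (U : R) (w : omega) : Prop :=
  (-U <= oA w <= U) /\ (-U <= oB w <= U) /\ (-U <= oC w <= U) /\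
  (0 <= oal w < 2 * pi) /\ (0 <= obe w < 2 * pi) /\ (0 <= oga w < 2 * pi).

Fixpoint all_Omega0 (U : R) (ws : seq omega) : Prop :=
  match ws with [::] => True | w :: ws' => in_Omega0 U w /\ all_Omega0 U ws' end.

Definition fA (A al : R) (p : 'rV[R]_3) : 'rV[R]_3 :=
  vec3 (cx p + A * sin (cz p + al)) (cy p + A * cos (cz p + al)) (cz p).
Definition fB (B be : R) (p : 'rV[R]_3) : 'rV[R]_3 :=
  vec3 (cx p) (cy p + B * sin (cx p + be)) (cz p + B * cos (cx p + be)).
Definition fC (C ga : R) (p : 'rV[R]_3) : 'rV[R]_3 :=
  vec3 (cx p + C * cos (cy p + ga)) (cy p) (cz p + C * sin (cy p + ga)).

Definition f_om (w : omega) (p : 'rV[R]_3) : 'rV[R]_3 :=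
  fC (oC w) (oga w) (fB (oB w) (obe w) (fA (oA w) (oal w) p)).

(* f_{omega^N} = f_{omega_N} o ... o f_{omega_1}, with ws = [:: omega_1; ...; omega_N] *)
Definition f_seq (ws : seq omega) (p : 'rV[R]_3) : 'rV[R]_3 :=
  foldl (fun q w => f_om w q) p ws.

End Defs.

(* Main.v *)
Require Import Defs.
From HB Require Import structures.
From mathcomp Require Import all_boot all_order all_algebra.
From mathcomp Require Import all_classical all_reals all_analysis.
From mathcomp.algebra_tactics Require Import ring lra.
Import Order.TTheory GRing.Theory Num.Theory.
Import numFieldNormedType.Exports.
Local Open Scope ring_scope.
Set Implicit Arguments. Unset Strict Implicit. Unset Printing Implicit Defensive.

Lemma diff3 (K : numFieldType) (V W : normedModType K) (f1 f2 f3 : V -> W) (p : V) :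
  differentiable f1 p -> differentiable f2 p -> differentiable f3 p ->
  differentiable (f1 + f2 + f3) p /\
  forall h : V, 'd (f1 + f2 + f3) p h = 'd f1 p h + 'd f2 p h + 'd f3 p h.
Proof.
move=> d1 d2 d3.
have d12 : differentiable (f1 + f2) p by exact: differentiableD.
split; first exact: differentiableD.
by move=> h; rewrite (diffD d12 d3) (diffD d1 d2).
Qed.

Lemma diffZl_pt (K : numFieldType) (V W : normedModType K) (k : V -> K) (f : W) (x h : V) :
  differentiable k x -> 'd (fun z => k z *: f) x h = 'd k x h *: f.
Proof. by move=> dk; rewrite diffZl. Qed.

Lemma diff_id_pt (K : numFieldType) (V : normedModType K) (x h : V) :
  'd id x h = h.
Proof. by rewrite diff_val. Qed.

Lemma diff_gen (K : numFieldType) (V : normedModType K) (s c : V -> K) (a b : V) (p : V)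
  (ds' dc' : V -> K) :
  differentiable s p -> 'd s p = ds' :> (V -> K) ->
  differentiable c p -> 'd c p = dc' :> (V -> K) ->
  differentiable (fun q => q + s q *: a + c q *: b) p /\
  forall h, 'd (fun q => q + s q *: a + c q *: b) p h = h + ds' h *: a + dc' h *: b.
Proof.
move=> ds es dc ec.
have d1 : differentiable (fun q => s q *: a) p by exact: differentiableZl.
have d2 : differentiable (fun q => c q *: b) p by exact: differentiableZl.
have did : differentiable (@id V) p by exact: ex_diff.
have [dd ed] := diff3 did d1 d2.
have -> : (fun q => q + s q *: a + c q *: b) = id + (fun q => s q *: a) + (fun q => c q *: b).
  by apply/funext => q.
split => // h.
by rewrite ed diff_val diffZl // diffZl // es ec.
Qed.

Lemma diff_comp_pt (K : numFieldType) (U V W : normedModType K) (f : U -> V) (g : V -> W)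
  (x : U) (df : U -> V) (dg : V -> W) :
  differentiable f x -> (forall h, 'd f x h = df h) ->
  differentiable g (f x) -> (forall h, 'd g (f x) h = dg h) ->
  differentiable (g \o f) x /\ forall h, 'd (g \o f) x h = dg (df h).
Proof.
move=> d1 e1 d2 e2; split; first exact: differentiable_comp.
by move=> h; rewrite diff_comp //= e1 e2.
Qed.

Section S.
Variable R : realType.
Implicit Types p q h : 'rV[R]_3.

Definition crd (j : 'I_3) (q : 'rV[R]_3) : R := q ord0 j.

Lemma diff_crd j p : differentiable (crd j) p /\ 'd (crd j) p = crd j :> (_ -> _).
Proof.
have @f : {linear 'rV[R]_3 -> R}.
  by exists (crd j); do 2![eexists]; do ?[constructor];
     rewrite /crd ?mxE// => ? *; rewrite ?mxE//; move=> ?; rewrite !mxE.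
rewrite (_ : crd j = f) //; split.
  exact/linear_differentiable/coord_continuous.
exact/diff_lin/coord_continuous.
Qed.

Lemma diff_sinc j al p :
  differentiable (fun q => sin (crd j q + al)) p /\
  'd (fun q => sin (crd j q + al)) p = (fun h => crd j h * cos (crd j p + al)) :> (_ -> _).
Proof.
have [dc ec] := diff_crd j p.
have dg : differentiable (crd j + cst al) p.
  by apply: differentiableD => //.
have eg : 'd (crd j + cst al) p = crd j :> (_ -> _).
  rewrite diffD // ec diff_cst; apply/funext => h /=; rewrite ?fctE; first [by rewrite addr0 | by rewrite /= addr0 | by rewrite lfunE /= addr0].
have ds : differentiable (@sin R) ((crd j + cst al) p).
  exact/derivable1_diffP/derivable_sin.
suff : differentiable (sin \o (crd j + cst al)) p /\ 'd (sin \o (crd j + cst al)) p = (fun h => crd j h * cos (crd j p + al)) :> (_ -> _) by [].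
split; first exact: differentiable_comp.
rewrite diff_comp // eg deriv1E; last exact: derivable_sin.
apply/funext => h /=. rewrite derive1E derive_val /GRing.scale /=. by [].
Qed.

Lemma diff_trigc (f : R -> R) j al p : (forall x, derivable f x 1) ->
  differentiable (fun q => f (crd j q + al)) p /\
  'd (fun q => f (crd j q + al)) p = (fun h => crd j h * (f^`()%classic) (crd j p + al)) :> (_ -> _).
Proof.
move=> df.
have [dc ec] := diff_crd j p.
have dg : differentiable (crd j + cst al) p.
  by apply: differentiableD => //.
have eg : 'd (crd j + cst al) p = crd j :> (_ -> _).
  rewrite diffD // ec diff_cst; apply/funext => h /=; rewrite ?fctE; first [by rewrite addr0 | by rewrite /= addr0 | by rewrite lfunE /= addr0].
have ds : differentiable f ((crd j + cst al) p).
  exact/derivable1_diffP/df.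
suff : differentiable (f \o (crd j + cst al)) p /\ 'd (f \o (crd j + cst al)) p = (fun h => crd j h * (f^`()%classic) (crd j p + al)) :> (_ -> _) by [].
split; first exact: differentiable_comp.
rewrite diff_comp // eg deriv1E; last exact: df.
by apply/funext => h /=.
Qed.

Definition G j K al (e e' : 'rV[R]_3) p :=
  p + sin (crd j p + al) *: (K *: e) + cos (crd j p + al) *: (K *: e').

Definition dG j K al (e e' : 'rV[R]_3) p h :=
  h + (crd j h * cos (crd j p + al)) *: (K *: e) - (crd j h * sin (crd j p + al)) *: (K *: e').

Lemma diff_G j K al e e' p :
  differentiable (G j K al e e') p /\ forall h, 'd (G j K al e e') p h = dG j K al e e' p h.
Proof.
have [ds es] := diff_trigc j al p (@derivable_sin R).
have [dc ec] := diff_trigc j al p (@derivable_cos R).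
have [dd ed] := diff_gen (K *: e) (K *: e') ds es dc ec.
split; first exact: dd.
move=> h; rewrite ed.
rewrite derive1E derive_val derive1E derive_val /dG.
by rewrite mulrN scaleNr.
Qed.
End S.

Section S3.
Variable R : realType.
Implicit Types p q h u w : 'rV[R]_3.

Definition i0 : 'I_3 := ord0.
Definition i1 : 'I_3 := inord 1.
Definition i2 : 'I_3 := inord 2.

Lemma crdD j u w : crd j (u + w) = crd j u + crd j w.
Proof. by rewrite /crd mxE. Qed.
Lemma crdB j u w : crd j (u - w) = crd j u - crd j w.
Proof. by rewrite /crd !mxE. Qed.
Lemma crdN j u : crd j (- u) = - crd j u.
Proof. by rewrite /crd mxE. Qed.
Lemma crdZ j (a : R) u : crd j (a *: u) = a * crd j u.
Proof. by rewrite /crd mxE. Qed.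
Lemma crd0 j : crd j (0 : 'rV[R]_3) = 0.
Proof. by rewrite /crd mxE. Qed.

Lemma crd_vec0 (a b c : R) : crd i0 (vec3 a b c) = a.
Proof. by rewrite /crd /vec3 mxE. Qed.
Lemma crd_vec1 (a b c : R) : crd i1 (vec3 a b c) = b.
Proof. by rewrite /crd /vec3 mxE /i1 inordK. Qed.
Lemma crd_vec2 (a b c : R) : crd i2 (vec3 a b c) = c.
Proof. by rewrite /crd /vec3 mxE /i2 inordK. Qed.

Lemma row3P u w : crd i0 u = crd i0 w -> crd i1 u = crd i1 w -> crd i2 u = crd i2 w -> u = w.
Proof.
move=> h0 h1 h2; apply/rowP => k.
case: k => [[|[|[|n]]] hn] //.
- by move: h0; rewrite /crd /i0 (_ : ord0 = Ordinal hn) //; apply/val_inj.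
- by move: h1; rewrite /crd /i1 (_ : inord 1 = Ordinal hn) //; apply/val_inj; rewrite /= inordK.
- by move: h2; rewrite /crd /i2 (_ : inord 2 = Ordinal hn) //; apply/val_inj; rewrite /= inordK.
Qed.

Definition crdE := (crdD, crdB, crdN, crdZ, crd0, crd_vec0, crd_vec1, crd_vec2).


Lemma cxE p : cx p = crd i0 p. Proof. by []. Qed.
Lemma cyE p : cy p = crd i1 p. Proof. by []. Qed.
Lemma czE p : cz p = crd i2 p. Proof. by []. Qed.

Definition e1 : 'rV[R]_3 := vec3 1 0 0.
Definition e2 : 'rV[R]_3 := vec3 0 1 0.
Definition e3 : 'rV[R]_3 := vec3 0 0 1.

Lemma fA_G A al : fA A al = G i2 A al e1 e2.
Proof.
apply/funext => p; apply: row3P; rewrite /fA /G /e1 /e2 !crdE ?cxE ?cyE ?czE; ring.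
Qed.
Lemma fB_G B be : fB B be = G i0 B be e2 e3.
Proof.
apply/funext => p; apply: row3P; rewrite /fB /G /e2 /e3 !crdE ?cxE ?cyE ?czE; ring.
Qed.
Lemma fC_G C ga : fC C ga = G i1 C ga e3 e1.
Proof.
apply/funext => p; apply: row3P; rewrite /fC /G /e3 /e1 !crdE ?cxE ?cyE ?czE; ring.
Qed.

Lemma diff_fom (w : omega R) p : differentiable (f_om w) p /\ forall h, 'd (f_om w) p h =
  dG i1 (oC w) (oga w) e3 e1 (fB (oB w) (obe w) (fA (oA w) (oal w) p))
   (dG i0 (oB w) (obe w) e2 e3 (fA (oA w) (oal w) p) (dG i2 (oA w) (oal w) e1 e2 p h)).
Proof.
have -> : f_om w = G i1 (oC w) (oga w) e3 e1 \o (G i0 (oB w) (obe w) e2 e3 \o G i2 (oA w) (oal w) e1 e2).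
  by apply/funext=> q; rewrite /f_om fA_G fB_G fC_G.
rewrite fA_G fB_G.
have [d1 E1] := diff_G i2 (oA w) (oal w) e1 e2 p.
have [d2 E2] := diff_G i0 (oB w) (obe w) e2 e3 (G i2 (oA w) (oal w) e1 e2 p).
have [d12 E12] := diff_comp_pt d1 E1 d2 E2.
have [d3 E3] := diff_G i1 (oC w) (oga w) e3 e1 (G i0 (oB w) (obe w) e2 e3 (G i2 (oA w) (oal w) e1 e2 p)).
have [d E] := diff_comp_pt d12 E12 d3 E3.
by split.
Qed.

End S3.

Arguments e1 {R}. Arguments e2 {R}. Arguments e3 {R}.
Section S4.
Variable R : realType.
Implicit Types p q h u w : 'rV[R]_3.

Lemma sin_int (x : R) (n : int) : sin (x + (pi *+ 2) * n%:~R) = sin x /\ cos (x + (pi *+ 2) * n%:~R) = cos x.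
Proof.
have sp : periodic (@sin R) (pi *+ 2) by exact: sinD2pi.
have cp : periodic (@cos R) (pi *+ 2) by exact: cosD2pi.
case: n => [m|m].
  have -> : (pi *+ 2) * ((Posz m)%:~R : R) = (pi *+ 2) *+ m.
  rewrite -[RHS]mulr_natr; first [by [] | by rewrite pmulrn | by rewrite -pmulrn].
  by split; rewrite periodicn.
set y := x + _.
have -> : x = y + (pi *+ 2) *+ m.+1.
  rewrite /y NegzE -[_ *+ m.+1]mulr_natr mulrN.
  by rewrite subrK.
by split; rewrite periodicn.
Qed.
Lemma phase (t th : R) : exists al, 0 <= al < 2 * pi /\ sin (t + al) = sin th /\ cos (t + al) = cos th.
Proof.
set c := 2 * pi.
have c0 : 0 < c by rewrite /c mulr_gt0 // pi_gt0.
set u := th - t.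
set r := u / c.
set k := Num.floor r.
have h1 := floor_le r.
have h2 := floorD1_gt r.
rewrite intrD in h2.
have ur : u = r * c by rewrite /r divfK // gt_eqF.
exists (u - c * k%:~R); split.
  rewrite ur; apply/andP; split; nra.
have -> : t + (u - c * k%:~R) = th + (pi *+ 2) * (- k)%:~R.
  by rewrite /u /c intrN mulrN -mulr_natl; ring.
exact: sin_int.
Qed.
Inductive fam := FA | FB | FC.
Record move := Mv { mf : fam; mb : bool; ma : R }.

Definition Jf f : 'I_3 := match f with FA => i2 | FB => i0 | FC => i1 end.
Definition Ef f : 'rV[R]_3 := match f with FA => e1 | FB => e2 | FC => e3 end.
Definition Ef' f : 'rV[R]_3 := match f with FA => e2 | FB => e3 | FC => e1 end.
Definition Vt m := if mb m then - Ef' (mf m) else Ef (mf m).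
Definition Dp m := if mb m then Ef (mf m) else Ef' (mf m).
Definition tanm m h := h + (ma m * crd (Jf (mf m)) h) *: Vt m.
Definition disp m := ma m *: Dp m.
Definition om m al : omega R := match mf m with
  | FA => Omega (ma m) 0 0 al 0 0
  | FB => Omega 0 (ma m) 0 0 al 0
  | FC => Omega 0 0 (ma m) 0 0 al end.

Lemma G0 j al e e' p : G j 0 al e e' p = p.
Proof. by rewrite /G !scale0r !scaler0 !addr0. Qed.
Lemma dG0 j al e e' p h : dG j 0 al e e' p h = h.
Proof. by rewrite /dG !scale0r !scaler0 subr0 addr0. Qed.

Lemma realize1 m p al :
  sin (crd (Jf (mf m)) p + al) = (if mb m then 1 else 0) ->
  cos (crd (Jf (mf m)) p + al) = (if mb m then 0 else 1) ->
  f_om (om m al) p = p + disp m /\ differentiable (f_om (om m al)) p /\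
  forall h, 'd (f_om (om m al)) p h = tanm m h.
Proof.
move=> hs hc; have [d E] := diff_fom (om m al) p.
split; last split => //.
  rewrite /f_om fA_G fB_G fC_G.
  clear d E; case: m hs hc => [[] [] a] /= hs hc; rewrite ?G0 /G ?hs ?hc /disp /Dp /=;
    apply: row3P; rewrite /e1 /e2 /e3 !crdE; ring.
move=> h; rewrite E; clear d E.
case: m hs hc => [[] [] a] /= hs hc; rewrite ?fA_G ?fB_G ?G0 ?dG0 /dG ?hs ?hc /tanm /Vt /=;
    apply: row3P; rewrite /e1 /e2 /e3 !crdE; ring.
Qed.
End S4.

Lemma diff_idf (K : numFieldType) (V : normedModType K) (p : V) :
  differentiable (fun q : V => q) p /\ forall h, 'd (fun q : V => q) p h = h.
Proof.
split; first exact: ex_diff.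
by move=> h; rewrite diff_val.
Qed.

Section S5.
Variable R : realType.
Implicit Types p q h u w : 'rV[R]_3.

Fixpoint act (ms : seq (move R)) h := match ms with [::] => h | m :: ms' => act ms' (tanm m h) end.
Fixpoint dispL (ms : seq (move R)) : 'rV[R]_3 := match ms with [::] => 0 | m :: ms' => disp m + dispL ms' end.
Fixpoint boundedL (U : R) (ms : seq (move R)) : Prop :=
  match ms with [::] => True | m :: ms' => `|ma m| <= U /\ boundedL U ms' end.

Lemma om_in (U : R) (m : move R) (al : R) : 0 < U -> `|ma m| <= U -> 0 <= al < 2 * pi -> in_Omega0 U (om m al).
Proof.
move=> hU hm hal.
have pi0 : 0 < 2 * pi :> R by apply: mulr_gt0; [lra | exact: pi_gt0].
have hm' : - U <= ma m <= U by rewrite -ler_norml.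
have z : - U <= 0 <= U by apply/andP; split; lra.
have z' : (0:R) <= 0 < 2 * (pi : R) by apply/andP; split; lra.
by rewrite /in_Omega0; case: m hm hm' => [[] b a] /= hm hm'.
Qed.

Lemma realize U (hU : 0 < U) ms p : boundedL U ms ->
  exists ws, all_Omega0 U ws /\ f_seq ws p = p + dispL ms /\
    differentiable (f_seq ws) p /\ forall h, 'd (f_seq ws) p h = act ms h.
Proof.
elim: ms p => [|m ms IH] p /=.
  move=> _; exists [::]; split => //; split; first by rewrite addr0.
  have [a b] := diff_idf p.
  by split; [exact: a | exact: b].
move=> [hm hms].
have [al [hal [hs hc]]] := phase (crd (Jf (mf m)) p) (if mb m then pi / 2 else 0).
have hs' : sin (crd (Jf (mf m)) p + al) = (if mb m then 1 else 0).
  by rewrite hs; case: (mb m); rewrite ?sin_pihalf ?sin0.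
have hc' : cos (crd (Jf (mf m)) p + al) = (if mb m then 0 else 1).
  by rewrite hc; case: (mb m); rewrite ?cos_pihalf ?cos0.
have [Ev [d1 E1]] := realize1 hs' hc'.
have [ws [hws [Ews [dws Edws]]]] := IH (p + disp m) hms.
exists (om m al :: ws); split; first by split => //; exact: om_in.
rewrite -Ev in Ews dws Edws.
have [d E] := diff_comp_pt d1 E1 dws Edws.
split; first by rewrite /f_seq /= -/(f_seq ws (f_om (om m al) p)) Ews Ev addrA.
by split.
Qed.

End S5.

Section S6.
Variable R : realType.
Implicit Types p q h u w : 'rV[R]_3.

Lemma tanm_add f b (a c : R) h :
  tanm (Mv f b a) (tanm (Mv f b c) h) = tanm (Mv f b (c + a)) h.
Proof.
by case: f; case: b; rewrite /tanm /Vt /=; apply: row3P; rewrite /e1 /e2 /e3 !crdE; ring.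
Qed.

Lemma tanm0 f b h : tanm (Mv f b 0) h = h.
Proof. by rewrite /tanm /= mul0r scale0r addr0. Qed.

Lemma tanm_inv f b (a : R) h : tanm (Mv f b (- a)) (tanm (Mv f b a) h) = h.
Proof. by rewrite tanm_add subrr tanm0. Qed.

Lemma act_cat (l1 l2 : seq (move R)) h : act (l1 ++ l2) h = act l2 (act l1 h).
Proof. by elim: l1 h => [|m l1 IH] h //=. Qed.

Lemma dispL_cat (l1 l2 : seq (move R)) : dispL (l1 ++ l2) = dispL l1 + dispL l2.
Proof. by elim: l1 => [|m l1 IH] /=; rewrite ?add0r // IH addrA. Qed.

Fixpoint invL (ms : seq (move R)) : seq (move R) :=
  match ms with [::] => [::] | m :: ms' => invL ms' ++ [:: Mv (mf m) (mb m) (- ma m)] end.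

Lemma act_invL ms h : act (invL ms) (act ms h) = h.
Proof.
elim: ms h => [|[f b a] ms IH] h //=.
by rewrite act_cat IH /= tanm_inv.
Qed.

Lemma act_nseq k f b (c : R) h : act (nseq k (Mv f b c)) h = tanm (Mv f b (k%:R * c)) h.
Proof.
elim: k h => [|k IH] h /=; first by rewrite mul0r tanm0.
by rewrite IH tanm_add mulrSr mulrDl mul1r addrC.
Qed.

Lemma dispL_nseq k f b (c : R) : dispL (nseq k (Mv f b c)) = disp (Mv f b (k%:R * c)).
Proof.
elim: k => [|k IH] /=; first by rewrite /disp /= mul0r scale0r.
by rewrite IH /disp /= mulrSr mulrDl mul1r scalerDl addrC.
Qed.

Definition Nm (U : R) (m : move R) : nat := (Num.truncn (`|ma m| / U)).+1.

Fixpoint splitL (U : R) (ms : seq (move R)) : seq (move R) :=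
  match ms with
  | [::] => [::]
  | m :: ms' => nseq (Nm U m) (Mv (mf m) (mb m) (ma m / (Nm U m)%:R)) ++ splitL U ms'
  end.

Lemma splitL_ok (U : R) (hU : 0 < U) ms :
  [/\ boundedL U (splitL U ms), forall h, act (splitL U ms) h = act ms h &
      dispL (splitL U ms) = dispL ms].
Proof.
elim: ms => [|[f b a] ms [IH1 IH2 IH3]] //.
set n := Nm U (Mv f b a).
have -> : splitL U (Mv f b a :: ms) = nseq n (Mv f b (a / n%:R)) ++ splitL U ms by [].
have n0 : 0 < (n%:R : R) by rewrite ltr0n.
have kE : n%:R * (a / n%:R) = a by rewrite mulrC divfK // gt_eqF.
split.
- have hb : `|a / n%:R| <= U.
    rewrite normrM normfV (gtr0_norm n0) ler_pdivrMr //.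
    have h : `|a| / U < n%:R := truncnS_gt _.
    rewrite ltr_pdivrMr // in h; rewrite mulrC; exact: ltW.
  have : forall k, boundedL U (nseq k (Mv f b (a / n%:R)) ++ splitL U ms).
    by elim => [|k IHk] //=.
  by move=> H; exact: H.
- by move=> h; rewrite act_cat act_nseq kE IH2.
- by rewrite dispL_cat dispL_nseq kE IH3.
Qed.

End S6.

Section S7.
Variable R : realType.
Implicit Types p q h u w : 'rV[R]_3.

Definition T21 (t : R) := Mv FB false t.
Definition T23 (t : R) := Mv FA true (- t).
Definition T12 (t : R) := Mv FC true (- t).
Definition T31 (t : R) := Mv FB true (- t).

Lemma step1 w : crd i1 w != 0 ->
  act [:: T12 ((1 - crd i0 w) / crd i1 w); T21 (- crd i1 w); T31 (- crd i2 w)] w = e1.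
Proof.
move=> w1; rewrite /= /tanm /Vt /=.
by apply: row3P; rewrite /e1 /e2 /e3 !crdE; field.
Qed.

Lemma prog (v : 'rV[R]_3) : v != 0 -> exists ms : seq (move R), act ms v = e1.
Proof.
move=> v0.
case: (eqVneq (crd i1 v) 0) => w1; last by eexists; exact: step1.
case: (eqVneq (crd i0 v) 0) => a0.
  have a2 : crd i2 v != 0.
    apply/negP => /eqP a2; move/eqP: v0; apply; apply: row3P; by rewrite ?crd0.
  exists (T23 1 :: [:: T12 ((1 - crd i0 (tanm (T23 1) v)) / crd i1 (tanm (T23 1) v));
     T21 (- crd i1 (tanm (T23 1) v)); T31 (- crd i2 (tanm (T23 1) v))]).
  rewrite [act _ _]/=; apply: step1.
  by rewrite /tanm /Vt /= /e2 !crdE w1 mulN1r mulrN1 opprK add0r.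
  exists (T21 1 :: [:: T12 ((1 - crd i0 (tanm (T21 1) v)) / crd i1 (tanm (T21 1) v));
     T21 (- crd i1 (tanm (T21 1) v)); T31 (- crd i2 (tanm (T21 1) v))]).
  rewrite [act _ _]/=; apply: step1.
  by rewrite /tanm /Vt /= /e2 !crdE w1; rewrite mul1r mulr1 add0r.
Qed.

End S7.

Lemma sphere_neq0 (R : realType) (v : 'rV[R]_3) : on_sphere v -> v != 0.
Proof.
move=> hv; apply/eqP => v0; move: hv; rewrite v0 /on_sphere /enorm.
rewrite big1 => [|i _]; last by rewrite mxE expr0n.
by rewrite sqrtr0 => /eqP; rewrite eq_sym oner_eq0.
Qed.

Unset Implicit Arguments.
Theorem proposition3p2 (R : realType) (U : R) (hU : 0 < U)
  (x v xs vs : 'rV[R]_3) (hv : on_sphere v) (hvs : on_sphere vs) :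
  exists (N : nat) (ws : seq (omega R)),
    [/\ size ws = N,
        all_Omega0 U ws,
        torus_eq (f_seq ws x) xs
      & (enorm ('d (f_seq ws) x v))^-1 *: ('d (f_seq ws) x v) = vs].
Proof.
have [Q1 hQ1] := prog (sphere_neq0 hv).
have [Q3 hQ3] := prog (sphere_neq0 hvs).
set D := xs - x - dispL Q1 - dispL (invL Q3).
set M2 := [:: Mv FA true (crd i0 D); Mv FA false (crd i1 D); Mv FC true (crd i2 D)].
have hM2a : act M2 e1 = e1.
  by rewrite /= /tanm /Vt /=; apply: row3P; rewrite /e1 /e2 /e3 !crdE; ring.
have hM2d : dispL M2 = D.
  by rewrite /= /disp /Dp /=; apply: row3P; rewrite /e1 /e2 /e3 !crdE; ring.
set ms := Q1 ++ M2 ++ invL Q3.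
have hact : act ms v = vs by rewrite !act_cat hQ1 hM2a -hQ3 act_invL.
have hdisp : x + dispL ms = xs.
  by rewrite !dispL_cat hM2d /D; apply: row3P; rewrite !crdE; ring.
have [hb hact' hdisp'] := splitL_ok hU ms.
have [ws [hws [Ews [dws Edws]]]] := realize hU x hb.
exists (size ws), ws; split => //.
  by exists (fun _ => 0) => i; rewrite Ews hdisp' hdisp mul0r addr0.
by rewrite Edws hact' hact hvs invr1 scale1r.
Qed.
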